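(* Let $m \geq 1$ be an integer and let $q \in (m,m+1)$ be a Pisot number which is not an algebraic unit. Then every Galois conjugate $q'$ of $q$ satisfies $|q'| \geq \frac{2}{m+1} \geq c_m$.
   Context: A Pisot number is a real algebraic integer $q>1$ all of whose other Galois conjugates have absolute value strictly less than $1$. Define $c_1 = \frac{\sqrt{5}-1}{2}$; define $c_2$ to be the absolute value of the root of minimal modulus of $x^4-3x^3+x^2-2x-1$; and for $m \geq 3$ define $c_m = \frac{m+1-\sqrt{m^2+2m-3}}{2}$. *)

(* Defs.v *)
From HB Require Import structures.
From mathcomp Require Import all_boot all_order all_algebra all_field.
From mathcomp Require Import algC algnum.
Set Implicit Arguments. Unset Strict Implicit. Unset Printing Implicit Defensive.
Import Order.TTheory GRing.Theory Num.Theory.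
Local Open Scope ring_scope.

Definition galois_conjugate (x z : algC) : Prop := root (minCpoly x) z.

Definition pisot (q : algC) : Prop :=
  [/\ q \is Num.real, 1 < q, q \in Aint &
      forall z, galois_conjugate q z -> z != q -> `|z| < 1].

Definition algebraic_unit (x : algC) : Prop :=
  [/\ x != 0, x \in Aint & x^-1 \in Aint].

Definition quartic2 : {poly algC} := 'X^4 - 3 * 'X^3 + 'X^2 - 2 * 'X - 1.

Definition quartic2_roots : seq algC := sval (closed_field_poly_normal quartic2).

Definition c2 : algC :=
  \big[Num.min/ `|head 0 quartic2_roots|]_(z <- quartic2_roots) `|z|.

(* The constants c_m, m >= 1 (value at m = 0 is irrelevant, set to 0). *)
Definition c (m : nat) : algC :=
  match m with
  | 0 => 0
  | 1 => (sqrtC 5 - 1) / 2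
  | 2 => c2
  | _ => (m.+1%:R - sqrtC (m%:R ^+ 2 + 2 * m%:R - 3)) / 2
  end.

(* Main.v *)
Require Import Defs.
From HB Require Import structures.
From mathcomp Require Import all_boot all_order all_algebra all_field.
From mathcomp Require Import algC algnum ring zify.
Import Order.TTheory GRing.Theory Num.Theory.
Local Open Scope ring_scope.

Lemma vieta4 (lc a b c d : algC) :
  quartic2 = lc *: \prod_(z <- [:: a; b; c; d]) ('X - z%:P) ->
  [/\ lc = 1, a + b + c + d = 3, a*b + a*c + a*d + b*c + b*d + c*d = 1,
      a*b*c + a*b*d + a*c*d + b*c*d = 2 & a*b*c*d = -1].
Proof.
move=> E.
have C i := congr1 (fun p : {poly algC} => p`_i) E.
rewrite !big_cons big_nil mulr1 /quartic2 in C.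
have C4 := C 4%N; have C3 := C 3%N; have C2 := C 2%N; have C1 := C 1%N; have C0 := C 0%N.
move: C4 C3 C2 C1 C0; rewrite !(mulrBl, coefE) /=.
move=> C4 C3 C2 C1 C0.
have L : lc = 1.
  apply: subr0_eq; have -> : lc - 1 = - ((1 - 0 *+ 3 + 0 - 0 *+ 2 - 0) - lc *
  (1 - 0 - c * (0 - 0) - b * (0 - 0 - c * (0 - 0)) -
   a * (0 - 0 - c * (0 - 0) - b * (0 - 0 - c * (0 - 0))))) by ring.
  by rewrite C4 subrr oppr0.
subst lc.
split=> //; apply: subr0_eq.
- set L3 := (_ - _ *+ 2 - _) in C3; set R3 := (_ * _) in C3.
  have -> : a + b + c + d - 3 = (L3 - R3) by rewrite /L3 /R3; ring.
  by rewrite C3 subrr.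
- set L3 := (_ - _ *+ 2 - _) in C2; set R3 := (_ * _) in C2.
  have -> : a * b + a * c + a * d + b * c + b * d + c * d - 1 = - (L3 - R3) by rewrite /L3 /R3; ring.
  by rewrite C2 subrr oppr0.
- set L3 := (_ - _ *+ 2 - _) in C1; set R3 := (_ * _) in C1.
  have -> : a * b * c + a * b * d + a * c * d + b * c * d - 2 = (L3 - R3) by rewrite /L3 /R3; ring.
  by rewrite C1 subrr.
- set L3 := (_ - 1) in C0; set R3 := (_ * _) in C0.
  have -> : a * b * c * d - -1 = - (L3 - R3) by rewrite /L3 /R3; ring.
  by rewrite C0 subrr oppr0.
Qed.
Lemma pow4_le (x : algC) : 0 <= x -> x <= 3 -> x ^+ 4 <= 81.
Proof.
move=> x0 x3.
have h2 : x ^+ 2 <= 9.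
  rewrite expr2 (_ : 9 = 3 * 3); last by rewrite -natrM.
  exact: ler_pM.
rewrite (_ : 4 = 2 * 2)%N // exprM expr2 (_ : 81 = 9 * 9); last by rewrite -natrM.
by apply: ler_pM => //; rewrite exprn_ge0.
Qed.

Lemma inv_bound (u v : algC) : 0 <= v -> 2/3 < u -> u * v = 1 -> (2 * `|v|) ^+ 4 <= 81.
Proof.
move=> v0 hu uv.
apply: pow4_le; first by rewrite mulr_ge0 // normr_ge0.
rewrite ger0_norm //.
have : 2/3 * v <= u * v by rewrite ler_wpM2r // ltW.
rewrite uv => h.
  have -> : 2 * v = (2/3 * v) * 3.
    by field.
apply: (le_trans (y := 1 * 3)); last by rewrite mul1r.
by rewrite ler_wpM2r // ler0n.
Qed.

Lemma quart_small (a b c d : algC) :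
  a*b + a*c + a*d + b*c + b*d + c*d = 1 ->
  a*b*c + a*b*d + a*c*d + b*c*d = 2 -> a + b + c + d = 3 -> a*b*c*d = -1 ->
  exists2 z, z \in [:: a; b; c; d] & `|z| <= 2/3.
Proof.
move=> e2 e3 e1 e4.
have R23 : (2/3 : algC) \is Num.real by rewrite ger0_real // divr_ge0 ?ler0n.
have key z : z \in [:: a; b; c; d] -> `|z| <= 2/3 \/ 2/3 < `|z|.
  move=> _; case: (boolP (`|z| <= 2/3)) => h; [by left | right].
  by rewrite real_ltNge ?normr_real.
case: (key a) => [|ha|ha]; first by rewrite !inE eqxx.
  by exists a; rewrite ?inE ?eqxx.
case: (key b) => [|hb|hb]; first by rewrite !inE eqxx orbT.
  by exists b; rewrite ?inE ?eqxx ?orbT.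
case: (key c) => [|hc|hc]; first by rewrite !inE eqxx !orbT.
  by exists c; rewrite ?inE ?eqxx ?orbT.
case: (key d) => [|hd|hd]; first by rewrite !inE eqxx !orbT.
  by exists d; rewrite ?inE ?eqxx ?orbT.
exfalso.
have S : (b*c*d)^+4 + (a*c*d)^+4 + (a*b*d)^+4 + (a*b*c)^+4 = 62.
  have -> : (b*c*d)^+4 + (a*c*d)^+4 + (a*b*d)^+4 + (a*b*c)^+4 =
    let E1 := a + b + c + d in
    let E2 := a*b + a*c + a*d + b*c + b*d + c*d in
    let E3 := a*b*c + a*b*d + a*c*d + b*c*d in
    let E4 := a*b*c*d in
    E3^+4 - 4 * E3^+2 * (E2 * E4) + 2 * (E2 * E4)^+2 + 4 * E3 * (E1 * E4^+2) - 4 * E4^+3.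
    rewrite /=; ring.
  rewrite /= e1 e2 e3 e4; ring.
have B (u v : algC) : 2/3 < `|u| -> u * v = -1 -> (2 * `|v|)^+4 <= 81.
  move=> hu uv; have := inv_bound `|u| `|v| (normr_ge0 v) hu.

  rewrite normr_id; apply.
  by rewrite -normrM uv normrN normr1.
have Ba : (2 * `|b*c*d|)^+4 <= 81.
  by apply: (B a (b*c*d) ha); rewrite !mulrA.
have Bb : (2 * `|a*c*d|)^+4 <= 81 by apply: (B b _ hb); rewrite -e4; ring.
have Bc : (2 * `|a*b*d|)^+4 <= 81 by apply: (B c _ hc); rewrite -e4; ring.
have Bd : (2 * `|a*b*c|)^+4 <= 81 by apply: (B d _ hd); rewrite -e4; ring.
have : 16 * `|(62 : algC)| <= 324.
  rewrite -S.
  apply: (le_trans (y := 16 * (`|(b*c*d)^+4| + `|(a*c*d)^+4| + `|(a*b*d)^+4| + `|(a*b*c)^+4|))).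
    rewrite ler_wpM2l ?ler0n //.
    by apply: (le_trans (ler_normD _ _)); rewrite lerD2r;
       apply: (le_trans (ler_normD _ _)); rewrite lerD2r;
       apply: (le_trans (ler_normD _ _)).
  have -> : 16 * (`|(b*c*d)^+4| + `|(a*c*d)^+4| + `|(a*b*d)^+4| + `|(a*b*c)^+4|) =
    (2 * `|b*c*d|)^+4 + (2 * `|a*c*d|)^+4 + (2 * `|a*b*d|)^+4 + (2 * `|a*b*c|)^+4.
    rewrite !normrX; ring.
  have -> : (324 : algC) = 81 + 81 + 81 + 81 by rewrite -!natrD.
  by rewrite !lerD.
by rewrite normr_nat -natrM ler_nat.
Qed.

Lemma bigmin_real (s : seq algC) (x0 : algC) (F : algC -> algC) :
  x0 \is Num.real -> (forall i, F i \is Num.real) ->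
  \big[Num.min/x0]_(i <- s) F i \is Num.real.
Proof.
move=> r0 rF; elim: s => [|i s IH]; first by rewrite big_nil.
rewrite big_cons /Num.min; case: ifP => _ //.
Qed.

Lemma bigmin_le (s : seq algC) (x0 : algC) (F : algC -> algC) z :
  x0 \is Num.real -> (forall i, F i \is Num.real) -> z \in s ->
  \big[Num.min/x0]_(i <- s) F i <= F z.
Proof.
move=> r0 rF; elim: s => [|i s IH] //; rewrite inE big_cons => /orP [/eqP ->|zs].
  rewrite /Num.min; case: ifP => h //.
  by rewrite real_leNgt ?h ?rF ?bigmin_real.
have := IH zs; rewrite /Num.min; case: ifP => h // hle.
by apply: le_trans hle; apply: ltW.
Qed.

Lemma c2_le : c2 <= 2/3.
Proof.
rewrite /c2 /quartic2_roots.
case: (closed_field_poly_normal quartic2) => s Ds /=.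
set lc := lead_coef quartic2 in Ds.
have q0 : quartic2`_0 = -1 by rewrite /quartic2 !coefE /=; ring.
have lc0 : lc != 0.
  apply/eqP => h; move: q0; rewrite Ds h scale0r coef0 => /eqP.
  by rewrite eq_sym oppr_eq0 oner_eq0.
have q4 : quartic2`_4 = 1 by rewrite /quartic2 !coefE /=; ring.
have qbig k : quartic2`_(k.+4.+1) = 0 by rewrite /quartic2 !coefE /=; ring.
have size_s : size s = 4%N.
  have := size_prod_XsubC s id.
  case: (ltngtP (size s) 4) => // hs.
    move=> szP; move: q4; rewrite Ds coefZ nth_default; first by rewrite mulr0 => /eqP; rewrite eq_sym oner_eq0.
    by rewrite szP.
  move=> szP; have := qbig (size s - 5)%N.
  rewrite (_ : (size s - 5).+4.+1 = size s)%N; last by lia.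
  rewrite Ds coefZ.
  have := monicP (monic_prod_XsubC s xpredT id); rewrite lead_coefE szP /= => ->.
  by rewrite mulr1 => /eqP; rewrite (negbTE lc0).
case: s Ds size_s => [|a [|b [|c [|d [|e s]]]]] // Ds _.
have [L e1 e2 e3 e4] := vieta4 _ _ _ _ _ Ds.
have [z zs hz] := quart_small _ _ _ _ e2 e3 e1 e4.
apply: le_trans hz; apply: bigmin_le => //; exact: normr_real.
Qed.

Lemma c_le m : (1 <= m)%N -> c m <= 2 / m.+1%:R.
Proof.
case: m => [//|[|[|m]]] _.
- rewrite /= divff ?pnatr_eq0 //.
  rewrite ler_pdivrMr ?ltr0n // mul1r lerBlDr.
  rewrite natr1 -[X in _ <= X](sqrCK (ler0n _ 3)).
  by rewrite ler_sqrtC ?qualifE /= ?ler0n ?exprn_ge0 // -natrX ler_nat.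
- exact: c2_le.
- rewrite [c _]/=.
  set M := m.+3.
  set D := (M%:R ^+ 2 + 2 * M%:R - 3 : algC).
  set s := sqrtC D.
  set N := (M.+1)%:R : algC.
  have N0 : 0 < N by rewrite ltr0n.
  have D0 : 0 <= D.
    rewrite /D -natrX -natrM -natrD.
    by rewrite subr_ge0 ler_nat /M; lia.
  have s0 : 0 <= s by rewrite sqrtC_ge0.
  have Ns : 0 < N + s by rewrite ltr_wpDr.
  have E : (N - s) / 2 = 2 / (N + s).
    have e : (N - s) * (N + s) = 4.
      have -> : (N - s) * (N + s) = N ^+ 2 - s ^+ 2 by ring.
      rewrite sqrtCK /D /N -natr1; ring.
    apply: (mulIf (x := 2 * (N + s))); first by rewrite mulf_neq0 ?pnatr_eq0 ?gt_eqF.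
    rewrite (_ : (N - s) / 2 * (2 * (N + s)) = (N - s) * (N + s)); last by field.
    rewrite e; field; by rewrite [1 + _]addrC natr1 gt_eqF.
  rewrite E ler_wpM2l ?ler0n // lef_pV2 ?qualifE /= ?N0 //.
  by rewrite lerDl.
Qed.

Lemma minC_simple x : ~~ root (minCpoly x)^`() x.
Proof.
have [p0 [Dp mon] dvP] := minCpolyP x.
rewrite Dp deriv_map dvP; apply/negP => dv.
have sz : (1 < size p0)%N by have := size_minCpoly x; rewrite Dp size_map_poly.
have nz : p0^`() != 0.
  apply/eqP => h; have := congr1 (fun p : {poly rat} => p`_(size p0).-2) h.
  rewrite coef_deriv coef0 (_ : (size p0).-2.+1 = (size p0).-1); last lia.
  rewrite -lead_coefE (monicP mon) => /eqP; rewrite pnatr_eq0; lia.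
by have := dvdp_leq nz dv; rewrite leqNgt lt_size_deriv ?monic_neq0.
Qed.

Lemma drop_map (p0 : {poly rat}) :
  drop_poly 1 (map_poly ratr p0 : {poly algC}) = map_poly ratr (drop_poly 1 p0).
Proof. by apply/polyP => i; rewrite coef_drop_poly !coef_map coef_drop_poly. Qed.

Theorem theorem2p3 (m : nat) (q : algC) :
  (1 <= m)%N ->
  m%:R < q -> q < m.+1%:R ->
  pisot q -> ~ algebraic_unit q ->
  forall q' : algC, galois_conjugate q q' ->
    2 / m.+1%:R <= `|q'| /\ c m <= 2 / m.+1%:R.
Proof.
move=> m1 mq qm [qR q1 qA qconj] nunit q' hq'.
split; last exact: c_le.
have N0 : 0 < m.+1%:R :> algC by rewrite ltr0n.
have q0' : 0 < q by apply: lt_trans q1; exact: ltr01.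
have q0 : q != 0 by rewrite gt_eqF.
case: (eqVneq q' q) => [->|neq].
  rewrite (ger0_norm (ltW q0')) ler_pdivrMr //.
  apply: (le_trans (y := m%:R * m.+1%:R)).
    by rewrite -natrM ler_nat; nia.
  by rewrite ler_wpM2r ?ltW.
set p := minCpoly q.
have [r Dr] := closed_field_poly_normal p.
rewrite (monicP (minCpoly_monic q)) scale1r in Dr.
have pZ : p \is a polyOver Num.int := qA.
set a0 := p`_0.
have a0Z : a0 \is a Num.int := polyOverP pZ 0.
have take1 : take_poly 1 p = a0%:P.
  by apply/polyP => i; rewrite coef_take_poly coefC; case: i.
have key : (drop_poly 1 p).[q] * q = - a0.
  have := congr1 (fun P => P.[q]) (poly_take_drop 1 p).
  rewrite take1 hornerD hornerC hornerM hornerXn expr1 /=.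
  move: (root_minCpoly q); rewrite /root -/p => /eqP -> /eqP.
  by rewrite addrC addr_eq0 => /eqP.
have dZ : drop_poly 1 p \is a polyOver Aint.
  apply/polyOverP => i; rewrite coef_drop_poly; apply: Aint_Cint.
  exact: (polyOverP pZ).
have dA : (drop_poly 1 p).[q] \in Aint := rpred_horner dZ qA.
have a0n0 : a0 != 0.
  apply/eqP => a00; move: key; rewrite a00 oppr0 => /eqP.
  rewrite mulf_eq0 (negbTE q0) orbF => /eqP hd.
  have [p0 [Dp mon] dvP] := minCpolyP q.
  have : root (map_poly ratr (drop_poly 1 p0)) q.
    by rewrite /root -drop_map -Dp -/p hd.
  rewrite dvP => dv.
  have sz : (1 < size p0)%N by have := size_minCpoly q; rewrite Dp size_map_poly.
  have nz : drop_poly 1 p0 != 0 by rewrite -size_poly_eq0 size_drop_poly subn_eq0 -ltnNge.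
  by have := dvdp_leq nz dv; rewrite size_drop_poly leqNgt ltn_subrL (ltnW sz).
have a0n1 : `|a0| != 1.
  apply/negP => /eqP h1; apply: nunit; split => //.
  have a2 : a0 * a0 = 1.
    by rewrite -expr2 -real_normK ?h1 ?expr1n // Rreal_int.
  have -> : q^-1 = - ((drop_poly 1 p).[q] * a0).
    apply: (mulfI q0); rewrite mulfV // mulrN mulrA [q * _]mulrC key.
    by rewrite mulNr opprK a2.
  by rewrite rpredN rpredM // Aint_Cint.
have a02 : 2 <= `|a0|.
  have /natrP [n hn] := natr_norm_int a0Z.
  rewrite hn in a0n1 *.
  have : n != 0%N by move: a0n0; rewrite -normr_eq0 hn pnatr_eq0.
  by move: a0n1; rewrite pnatr_eq1 ler_nat; case: (n) => [|[|k]].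
have prodE : \prod_(z <- r) `|z| = `|a0|.
  have := congr1 (fun P => P.[0]) Dr; rewrite horner_prod horner_coef0 => h.
  rewrite /a0 h normr_prod; apply: eq_bigr => z _.
  by rewrite hornerXsubC sub0r normrN.
have qr : q \in r by rewrite -root_prod_XsubC -Dr root_minCpoly.
have simple : q \notin rem q r.
  apply/negP => qr2.
  have Dr2 : p = ('X - q%:P) * ('X - q%:P) * \prod_(z <- rem q (rem q r)) ('X - z%:P).
    by rewrite Dr (perm_big _ (perm_to_rem qr)) big_cons (perm_big _ (perm_to_rem qr2)) big_cons /= mulrA.
  have := minC_simple q; rewrite -/p Dr2 /root !derivM !hornerE subrr.
  by rewrite !(mul0r, mulr0, add0r, addr0) eqxx.
have q'r : q' \in rem q r.
  have : q' \in r by rewrite -root_prod_XsubC -Dr.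
  by rewrite (perm_mem (perm_to_rem qr)) inE (negbTE neq).
have Pr : \prod_(z <- r) `|z| = q * (`|q'| * \prod_(z <- rem q' (rem q r)) `|z|).
  rewrite (perm_big _ (perm_to_rem qr)) big_cons (perm_big _ (perm_to_rem q'r)) big_cons.
  by rewrite ger0_norm ?ltW.
have P1 : \prod_(z <- rem q' (rem q r)) `|z| <= 1.
  rewrite big_seq; apply: prodr_ile1 => z zr2.
  rewrite normr_ge0 /=; apply: ltW; apply: qconj.
    have zr1 := mem_rem zr2.
    by rewrite /galois_conjugate -/p Dr root_prod_XsubC (mem_rem zr1).
  by apply/eqP => zq; have := mem_rem zr2; rewrite zq (negbTE simple).
rewrite ler_pdivrMr //.
apply: (le_trans a02); rewrite -prodE Pr.
apply: (le_trans (y := q * `|q'|)).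
  rewrite ler_wpM2l ?(ltW q0') //.
  by apply: (le_trans (y := `|q'| * 1)); [rewrite ler_wpM2l | rewrite mulr1].
by rewrite mulrC ler_wpM2l ?(ltW qm) // normr_ge0.
Qed.
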